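(* Let $\mathfrak{g}$ be an SRN under the Single-Objective Framework, with common storage $s$, common data size $d$, common budget $b$, and link cost $c$. Then $\mathfrak{g}$ is bilaterally stable with storage and budget constraints if and only if the following holds. For every pair of distinct agents $i,j$ with $\langle ij\rangle\notin\mathfrak{g}$: if $b-c\,\eta_i(\mathfrak{g})\ge c$ and $s-d\,\eta_j(\mathfrak{g})\ge d$, then $b-c\,\eta_j(\mathfrak{g})<c$ or $s-d\,\eta_i(\mathfrak{g})<d$.
   Context: A social storage network is a simple undirected graph $\mathfrak{g}$ on a finite set of agents; $\eta_i(\mathfrak{g})$ is the number of neighbours of $i$. The networks $\mathfrak{g}\pm\langle ij\rangle$ are obtained by adding or removing the link $\langle ij\rangle$. In the Single-Objective Framework the utility of agent $i$ is $u_i(\mathfrak{g})=\beta_i(1-\lambda^{\eta_i(\mathfrak{g})})$, where $\beta_i>0$ is the worth of $i$'s data and $\lambda\in(0,1)$ is the disk failure rate. An SRN (symmetric resource network) is such a network where every agent $i$ has: - offered storage $s_i=s$; - data size $d_i=d$; - budget $b_i=b$. The per-link cost is $c$. Remaining storage is $RS_i=s_i-\sum_{j\text{ neighbour of }i}d_j$ and remaining budget is $RB_i=b_i-c\,\eta_i(\mathfrak{g})$. $\mathfrak{g}$ is bilaterally stable with storage and budget constraints if both of the following hold. 1. For every link $\langle ij\rangle\in\mathfrak{g}$: if $u_i(\mathfrak{g}-\langle ij\rangle)>u_i(\mathfrak{g})$, then $u_j(\mathfrak{g}-\langle ij\rangle)<u_j(\mathfrak{g})$. 2. For every non-link $\langle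 ij\rangle$: if $u_i(\mathfrak{g}+\langle ij\rangle)>u_i(\mathfrak{g})$ and $RS_j\ge d_i$ and $RB_i\ge c$, then $u_j(\mathfrak{g}+\langle ij\rangle)<u_j(\mathfrak{g})$ or $RS_i<d_j$ or $RB_j<c$. *)

(* Defs.v *)
From HB Require Import structures.
From mathcomp Require Import all_boot all_order all_algebra.
Set Implicit Arguments. Unset Strict Implicit. Unset Printing Implicit Defensive.
Import Order.TTheory GRing.Theory Num.Theory.
Local Open Scope ring_scope.

Definition simple_graph (T : finType) (g : rel T) : Prop :=
  (forall i j, g i j = g j i) /\ (forall i, ~~ g i i).

Definition degree (T : finType) (g : rel T) (i : T) : nat := #|[set k | g i k]|.

Definition add_link (T : finType) (g : rel T) (i j : T) : rel T :=
  fun x y => [|| g x y, (x == i) && (y == j) | (x == j) && (y == i)].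
Definition del_link (T : finType) (g : rel T) (i j : T) : rel T :=
  fun x y => g x y && ~~ (((x == i) && (y == j)) || ((x == j) && (y == i))).

Definition util (R : realFieldType) (T : finType) (beta : T -> R) (lambda : R)
  (g : rel T) (i : T) : R := beta i * (1 - lambda ^+ degree g i).

Definition RS (R : realFieldType) (T : finType) (s d : T -> R) (g : rel T) (i : T) : R :=
  s i - \sum_(j | g i j) d j.

Definition RB (R : realFieldType) (T : finType) (b : T -> R) (c : R) (g : rel T) (i : T) : R :=
  b i - c * (degree g i)%:R.

(* Bilateral stability with storage and budget constraints. Links <ij> are
   between distinct agents; the conditions are required for every ordered pair. *)
Definition bilaterally_stable_sb (R : realFieldType) (T : finType)
  (beta : T -> R) (lambda : R) (s d b : T -> R) (c : R) (g : rel T) : Prop :=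
  (forall i j, i != j -> g i j ->
     util beta lambda (del_link g i j) i > util beta lambda g i ->
     util beta lambda (del_link g i j) j < util beta lambda g j) /\
  (forall i j, i != j -> ~~ g i j ->
     util beta lambda (add_link g i j) i > util beta lambda g i ->
     RS s d g j >= d i -> RB b c g i >= c ->
     [\/ util beta lambda (add_link g i j) j < util beta lambda g j,
         RS s d g i < d j | RB b c g j < c]).

(* Main.v *)
Require Import Defs.
From HB Require Import structures.
From mathcomp Require Import all_boot all_order all_algebra.
Import Order.TTheory GRing.Theory Num.Theory.
Local Open Scope ring_scope.

Lemma util_lt (R : realFieldType) (T : finType) (beta : T -> R) (lambda : R)
  (g1 g2 : rel T) x : 0 < beta x -> 0 < lambda < 1 ->
  (degree g1 x < degree g2 x)%N -> util beta lambda g1 x < util beta lambda g2 x.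
Proof.
move=> hb /andP[l0 l1] hd; rewrite /util ltr_pM2l //.
by rewrite ltrD2l ltrN2 ltr_iXn2l.
Qed.

Lemma deg_add (T : finType) (g : rel T) i j x :
  simple_graph g -> i != j -> ~~ g i j -> (x == i) || (x == j) ->
  degree (add_link g i j) x = (degree g x).+1.
Proof.
move=> [sym irr] ij nij hx; rewrite /degree.
have [y [hxy nxy hy]] : exists y, [/\ x != y, ~~ g x y & forall k, add_link g i j x k = (k == y) || g x k].
  case/orP: hx => /eqP ->.
  - exists j; split => // k; rewrite /add_link eqxx /= (negbTE ij) /=.
    by rewrite orbF orbC.
  - exists i; split; first by rewrite eq_sym.
    + by rewrite sym.
    + move=> k; rewrite /add_link eqxx /= (eq_sym j i) (negbTE ij) /=.
      by rewrite orbC.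
have -> : [set k | add_link g i j x k] = y |: [set k | g x k].
  by apply/setP => k; rewrite !inE hy.
by rewrite cardsU1 inE nxy.
Qed.

Lemma deg_del (T : finType) (g : rel T) i j x :
  simple_graph g -> g i j -> (x == i) || (x == j) ->
  (degree (del_link g i j) x < degree g x)%N.
Proof.
move=> [sym irr] gij hx; rewrite /degree; apply: proper_card.
have [y [gxy hy]] : exists y, g x y /\ ~~ del_link g i j x y.
  case/orP: hx => /eqP ->.
  - exists j; rewrite /del_link !eqxx /= gij; split => //; by rewrite andbF.
  - by exists i; rewrite -sym /del_link !eqxx /= orbT andbF.
apply/properP; split.
  by apply/subsetP => k; rewrite !inE /del_link => /andP[].
by exists y; rewrite !inE.
Qed.

Theorem theorem3 (R : realFieldType) (T : finType) (g : rel T)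
  (beta : T -> R) (lambda : R) (s0 d0 b0 c : R) (s d b : T -> R) :
  simple_graph g ->
  (forall i, 0 < beta i) -> 0 < lambda < 1 ->
  (forall i, s i = s0) -> (forall i, d i = d0) -> (forall i, b i = b0) ->
  bilaterally_stable_sb beta lambda s d b c g <->
  (forall i j, i != j -> ~~ g i j ->
     b0 - c * (degree g i)%:R >= c -> s0 - d0 * (degree g j)%:R >= d0 ->
     b0 - c * (degree g j)%:R < c \/ s0 - d0 * (degree g i)%:R < d0).
Proof.
move=> sg hb hl hs hd hbb.
have hRS x : RS s d g x = s0 - d0 * (degree g x)%:R.
  rewrite /RS hs (eq_bigr (fun _ => d0)) // sumr_const.
  rewrite /degree mulr_natr; congr (_ - _ *+ _).
  by apply: eq_card => k; rewrite inE.
have hRB x : RB b c g x = b0 - c * (degree g x)%:R by rewrite /RB hbb.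
have upadd i j : i != j -> ~~ g i j -> (i == i) || (i == j) ->
    util beta lambda g i < util beta lambda (add_link g i j) i.
  by move=> ij nij hx; apply: util_lt => //; rewrite (@deg_add _ _ _ _ _ sg ij).
have upaddj i j : i != j -> ~~ g i j ->
    util beta lambda g j < util beta lambda (add_link g i j) j.
  by move=> ij nij; apply: util_lt => //; rewrite (@deg_add _ _ _ _ _ sg ij) // eqxx orbT.
split.
- move=> [_ H] i j ij nij hbi hsj.
  have := H i j ij nij (upadd i j ij nij (introT orP (or_introl (eqxx i)))).
  rewrite !hRS !hRB !hd => /(_ hsj hbi) [h|h|h]; [|by right|by left].
  by move: (upaddj i j ij nij); rewrite ltNge (ltW h).
- move=> H; split.
  + move=> i j ij gij hlt; exfalso; move: hlt; apply/negP; rewrite -leNgt ltW //.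
    by apply: util_lt => //; apply: deg_del => //; rewrite eqxx.
  + move=> i j ij nij _ hsj hbi.
    rewrite hRS hd in hsj; rewrite hRB in hbi.
    have [h|h] := H i j ij nij hbi hsj.
    * by apply: Or33; rewrite hRB.
    * by apply: Or32; rewrite hRS hd.
Qed.
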